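(* Let $X$ and $Y$ be uniform spaces and $f\colon X\to Y$ a function that generates the uniform structure on $Y$. Then $f$ is a uniform covering map if and only if $X$ has a base of entourages $E$ such that $E$ evenly covers $f(E)$.
   Context: A uniform structure on a set $X$ is a filter $\mathcal{E}$ of symmetric subsets (entourages) of $X\times X$ containing the diagonal such that every $G_1\in\mathcal{E}$ admits $G\in\mathcal{E}$ with $G^2\subset G_1$, where $G^2=\{(x,z):\exists y,\ (x,y),(y,z)\in G\}$. For $x\in X$ and an entourage $E$, $B(x,E)=\{y:(x,y)\in E\}$. For a function $f\colon X\to Y$ and $E\subset X\times X$, $f(E)=\{(f(x),f(y)):(x,y)\in E\}$. A surjection $f\colon X\to Y$ from a uniform space generates the uniform structure on $Y$ if $\{f(E)\}_E$, $E$ ranging over entourages of $X$, is a base of the uniform structure of $Y$. For a symmetric $E\subset X\times X$ containing the diagonal, the Rips complex $R(X,E)$ is the simplicial complex (weak topology) with vertex set $X$ whose simplices are the finite sets $F\subset X$ with $F\times F\subset E$; $f$ induces the simplicial map $f_E\colon R(X,E)\to R(Y,f(E))$, $\sum t_ix_i\mapsto\sum t_if(x_i)$. A simplicial covering map is a simplicial map that is a topological covering map. $f\colon X\to Y$ is a uniform covering map if it generates the uniform structure on $Y$ and the entourages $E$ of $X$ for which $f_E\colon R(X,E)\to R(Y,f(E))$ is a simplicial covering map form a base of the uniform structure of $X$. A symmetric $E\subset X\times X$ evenly covers $f(E)$ if for every $x\in X$, $f$ maps $B(x,E)$ bijectively onto $B(f(x),f(E))$. *)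

(* Defs.v *)
From Stdlib Require Import Reals List ClassicalEpsilon.
Open Scope R_scope.

Definition rel (X : Type) := X -> X -> Prop.

Definition subrel {X} (E F : rel X) : Prop := forall x y, E x y -> F x y.
Definition symmetric_rel {X} (E : rel X) : Prop := forall x y, E x y -> E y x.
Definition has_diag {X} (E : rel X) : Prop := forall x, E x x.
Definition rel_square {X} (G : rel X) : rel X :=
  fun x z => exists y, G x y /\ G y z.

(** A uniform structure: a filter [U] of symmetric relations containing the
    diagonal (filter taken within symmetric subsets of X x X), such that
    every member G1 admits a member G with G^2 inside G1. *)
Record uniformity (X : Type) := Uniformity {
  ent : rel X -> Prop;
  ent_full : ent (fun _ _ => True);
  ent_sym : forall E, ent E -> symmetric_rel E;
  ent_diag : forall E, ent E -> has_diag E;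
  ent_up : forall E F, ent E -> symmetric_rel F -> subrel E F -> ent F;
  ent_inter : forall E F, ent E -> ent F -> ent (fun x y => E x y /\ F x y);
  ent_half : forall G1, ent G1 -> exists G, ent G /\ subrel (rel_square G) G1
}.
Arguments ent {X} u E.

Definition img_rel {X Y} (f : X -> Y) (E : rel X) : rel Y :=
  fun a b => exists x y, E x y /\ f x = a /\ f y = b.

Definition ball {X} (E : rel X) (x : X) : X -> Prop := fun y => E x y.

Definition is_base {X} (U : uniformity X) (P : rel X -> Prop) : Prop :=
  (forall E, P E -> ent U E) /\
  (forall G, ent U G -> exists E, P E /\ subrel E G).

Definition generates {X Y} (UX : uniformity X) (UY : uniformity Y) (f : X -> Y) : Prop :=
  (forall y, exists x, f x = y) /\
  (forall E, ent UX E -> ent UY (img_rel f E)) /\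
  (forall G, ent UY G -> exists E, ent UX E /\ subrel (img_rel f E) G).

Definition evenly_covers {X Y} (f : X -> Y) (E : rel X) : Prop :=
  forall x,
    (forall y, ball E x y -> ball (img_rel f E) (f x) (f y)) /\
    (forall y1 y2, ball E x y1 -> ball E x y2 -> f y1 = f y2 -> y1 = y2) /\
    (forall b, ball (img_rel f E) (f x) b -> exists y, ball E x y /\ f y = b).

Definition lsum (l : list R) : R := fold_right Rplus 0 l.

Definition is_simplex {V} (E : rel V) (s : list V) : Prop :=
  forall a b, In a s -> In b s -> E a b.

(** Points of |R(V,E)|: barycentric coordinate functions t : V -> R,
    nonnegative, whose support is a finite simplex, with coordinates summing to 1. *)
Definition rips_pt {V} (E : rel V) (t : V -> R) : Prop :=
  (forall v, 0 <= t v) /\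
  exists l : list V, NoDup l /\ (forall v, In v l <-> t v <> 0) /\
    is_simplex E l /\ lsum (map t l) = 1.

Definition supp_in {V} (t : V -> R) (s : list V) : Prop :=
  forall v, t v <> 0 -> In v s.

(** Open sets of the weak topology on |R(V,E)|: a set of points whose trace on
    every closed simplex |s| is open in |s| (Euclidean topology of |s|). *)
Definition weak_open {V} (E : rel V) (U : (V -> R) -> Prop) : Prop :=
  (forall t, U t -> rips_pt E t) /\
  forall s, is_simplex E s -> forall t, U t -> supp_in t s ->
    exists eps, 0 < eps /\
      forall u, rips_pt E u -> supp_in u s ->
        (forall v, In v s -> Rabs (u v - t v) < eps) -> U u.

Definition supp_list {V} (t : V -> R) : list V :=
  epsilon (inhabits nil) (fun l => NoDup l /\ forall v, In v l <-> t v <> 0).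

(** The induced simplicial map  sum t_i x_i |-> sum t_i f(x_i). *)
Definition push {X Y} (f : X -> Y) (t : X -> R) : Y -> R :=
  fun y => lsum (map (fun v => if excluded_middle_informative (f v = y) then t v else 0)
                     (supp_list t)).

(** Topological covering map p : A -> B between spaces given by carrier
    predicates and families of open sets (open sets are subsets of carriers):
    p is continuous and every point of B has an open neighbourhood U whose
    preimage is a disjoint union of open sets each mapped homeomorphically onto U. *)
Definition covering_map {A B} (PA : A -> Prop) (openA : (A -> Prop) -> Prop)
  (PB : B -> Prop) (openB : (B -> Prop) -> Prop) (p : A -> B) : Prop :=
  (forall a, PA a -> PB (p a)) /\
  (forall W, openB W -> openA (fun a => PA a /\ W (p a))) /\
  forall b, PB b -> exists U : B -> Prop, openB U /\ U b /\
    exists Sh : (A -> Prop) -> Prop,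
      (forall S, Sh S -> openA S) /\
      (forall S1 S2, Sh S1 -> Sh S2 -> (exists a, S1 a /\ S2 a) ->
                     forall a, S1 a <-> S2 a) /\
      (forall a, PA a -> U (p a) -> exists S, Sh S /\ S a) /\
      (forall S a, Sh S -> S a -> U (p a)) /\
      (forall S, Sh S ->
         (forall a1 a2, S a1 -> S a2 -> p a1 = p a2 -> a1 = a2) /\
         (forall u, U u -> exists a, S a /\ p a = u) /\
         (forall W, openA W -> openB (fun b => exists a, W a /\ S a /\ p a = b))).

Definition rips_covering {X Y} (f : X -> Y) (E : rel X) : Prop :=
  covering_map (rips_pt E) (weak_open E)
               (rips_pt (img_rel f E)) (weak_open (img_rel f E)) (push f).

Definition uniform_covering {X Y} (UX : uniformity X) (UY : uniformity Y) (f : X -> Y) : Prop :=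
  generates UX UY f /\ is_base UX (fun E => ent UX E /\ rips_covering f E).

(* Main.v *)
Require Import Defs.
From Stdlib Require Import Reals List Permutation ClassicalEpsilon FunctionalExtensionality Lra Classical.
Open Scope R_scope.

Lemma lsum_cons a l : lsum (a :: l) = a + lsum l.
Proof. reflexivity. Qed.

Lemma lsum_perm (l1 l2 : list R) : Permutation l1 l2 -> lsum l1 = lsum l2.
Proof.
  induction 1; simpl; try lra.
Qed.

Lemma supp_list_spec {V} (t : V -> R) (l : list V) :
  NoDup l -> (forall v, In v l <-> t v <> 0) ->
  NoDup (supp_list t) /\ forall v, In v (supp_list t) <-> t v <> 0.
Proof.
  intros H1 H2. unfold supp_list. apply epsilon_spec. exists l. auto.
Qed.

Lemma push_eq {X Y} (f : X -> Y) (t : X -> R) (l : list X) z :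
  NoDup l -> (forall v, In v l <-> t v <> 0) ->
  push f t z = lsum (map (fun v => if excluded_middle_informative (f v = z) then t v else 0) l).
Proof.
  intros H1 H2. destruct (supp_list_spec t l H1 H2) as [H3 H4].
  unfold push. apply lsum_perm. apply Permutation_map.
  apply NoDup_Permutation; auto.
  intro v. rewrite H4, H2. tauto.
Qed.

Lemma lsum_zero {V} (g : V -> R) l : (forall u, In u l -> g u = 0) -> lsum (map g l) = 0.
Proof.
  induction l; simpl; intros H; auto.
  rewrite H, IHl; auto; lra.
Qed.

Lemma lsum_one {V} (g : V -> R) l v : NoDup l -> In v l ->
  (forall u, In u l -> u <> v -> g u = 0) -> lsum (map g l) = g v.
Proof.
  induction l as [|a l IH]; simpl; intros Hn Hi H; [contradiction|].
  inversion Hn; subst.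
  destruct (classic (a = v)) as [e|ne].
  - subst. rewrite lsum_zero. lra. intros u Hu. apply H; auto. intro; subst; contradiction.
  - rewrite H; auto. rewrite IH; auto. lra. destruct Hi; [congruence|auto].
Qed.

Lemma lsum_nz {V} (g : V -> R) l : lsum (map g l) <> 0 -> exists u, In u l /\ g u <> 0.
Proof.
  intros H. destruct (classic (exists u, In u l /\ g u <> 0)) as [|H']; auto.
  exfalso; apply H; apply lsum_zero. intros u Hu. apply NNPP; intro; apply H'; eauto.
Qed.

Definition star {V} (E : rel V) (x : V) : (V -> R) -> Prop :=
  fun t => rips_pt E t /\ 0 < t x.

Lemma star_open {V} (E : rel V) x : weak_open E (star E x).
Proof.
  split. intros t [H _]; auto.
  intros s Hs t [Ht Hx] Hsupp. exists (t x). split; auto.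
  intros u Hu Hus Hclose. split; auto.
  assert (In x s) by (apply Hsupp; lra).
  specialize (Hclose x H). apply Rabs_def2 in Hclose. lra.
Qed.

Definition mix {V} (x y : V) (e : R) : V -> R := fun v =>
  (if excluded_middle_informative (x = v) then 1 - e else 0) +
  (if excluded_middle_informative (y = v) then e else 0).

Lemma mix_supp1 {V} (x y : V) e : (x = y \/ e = 0) -> e < 1 ->
  forall v, In v (x :: nil) <-> mix x y e v <> 0.
Proof.
  intros H He v. unfold mix; simpl.
  destruct H as [H|H]; subst;
  repeat destruct excluded_middle_informative; subst; intuition lra.
Qed.

Lemma mix_supp2 {V} (x y : V) e : x <> y -> 0 < e < 1 ->
  forall v, In v (x :: y :: nil) <-> mix x y e v <> 0.
Proof.
  intros H He v. unfold mix; simpl.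
  repeat destruct excluded_middle_informative; subst; try congruence; intuition lra.
Qed.

Lemma mix_rips {V} (E : rel V) x y e : E x x -> E x y -> E y x -> E y y -> 0 <= e < 1 ->
  rips_pt E (mix x y e).
Proof.
  intros Hxx Hxy Hyx Hyy He. split.
  - intro v; unfold mix; repeat destruct excluded_middle_informative; lra.
  - destruct (classic (x = y \/ e = 0)) as [H|H].
    + exists (x :: nil). split. constructor; [simpl; tauto|constructor].
      split. apply mix_supp1; auto; lra.
      split. intros a b [Ha|[]] [Hb|[]]; subst; auto.
      simpl. unfold mix. destruct H; subst;
      repeat destruct excluded_middle_informative; try congruence; lra.
    + assert (x <> y) by tauto. assert (e <> 0) by tauto.
      exists (x :: y :: nil). split. constructor; [simpl; intuition|constructor; [simpl; tauto|constructor]].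
      split. apply mix_supp2; auto; lra.
      split. intros a b [Ha|[Ha|[]]] [Hb|[Hb|[]]]; subst; auto.
      simpl. unfold mix.
      repeat destruct excluded_middle_informative; try congruence; lra.
Qed.

Lemma push_mix {X Y} (f : X -> Y) x y e : 0 <= e < 1 ->
  push f (mix x y e) = mix (f x) (f y) e.
Proof.
  intros He. extensionality z.
  destruct (classic (x = y \/ e = 0)) as [H|H].
  - rewrite (push_eq f _ (x :: nil)).
    2: constructor; [simpl; tauto|constructor].
    2: apply mix_supp1; auto; lra.
    simpl. unfold mix. destruct H; subst;
      repeat destruct excluded_middle_informative; try congruence; subst; try congruence; lra.
  - assert (x <> y) by tauto. assert (e <> 0) by tauto.
    rewrite (push_eq f _ (x :: y :: nil)).
    2: constructor; [simpl; intuition|constructor; [simpl; tauto|constructor]].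
    2: apply mix_supp2; auto; lra.
    simpl. unfold mix.
    repeat destruct excluded_middle_informative; try congruence; subst; try congruence; lra.
Qed.


Lemma cov_ec {X Y} (f : X -> Y) (E : rel X) :
  symmetric_rel E -> has_diag E -> rips_covering f E -> evenly_covers f E.
Proof.
  intros Hsym Hdiag [Hcont [Hcontin Hloc]] x.
  set (d := mix x x 0).
  assert (Hd : rips_pt E d) by (apply mix_rips; auto; lra).
  assert (Hpd : push f d = mix (f x) (f x) 0) by (apply push_mix; lra).
  destruct (Hloc (push f d) (Hcont d Hd)) as [U [HU [HUb [Sh [HSo [Hdisj [Hcov [Hin Hsh]]]]]]]].
  destruct (Hcov d Hd HUb) as [S [HS HSd]].
  destruct (Hsh S HS) as [Hinj [Hsurj Hopen]].
  assert (Hnear : forall y, E x y -> exists eps, 0 < eps /\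
             forall e, 0 < e < eps -> e < 1 -> S (mix x y e)).
  { intros y Hy. destruct (HSo S HS) as [_ Hw].
    assert (Hs : is_simplex E (x :: y :: nil)).
    { intros a b [Ha|[Ha|[]]] [Hb|[Hb|[]]]; subst; auto. }
    assert (Hsd : supp_in d (x :: y :: nil)).
    { intros v Hv. unfold d, mix in Hv. simpl.
      repeat destruct excluded_middle_informative; subst; auto; lra. }
    destruct (Hw _ Hs d HSd Hsd) as [eps [Heps Hu]].
    exists eps. split; auto. intros e He He1. apply Hu.
    - apply mix_rips; auto; lra.
    - intros v Hv. unfold mix in Hv. simpl.
      repeat destruct excluded_middle_informative; subst; auto; lra.
    - intros v Hv. unfold d, mix.
      repeat destruct excluded_middle_informative; subst; apply Rabs_def1; lra. }
  split; [|split].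
  - intros y Hy. exists x, y. auto.
  - intros y1 y2 H1 H2 Hf. apply NNPP; intro Hne.
    destruct (Hnear y1 H1) as [e1 [He1 Hn1]].
    destruct (Hnear y2 H2) as [e2 [He2 Hn2]].
    set (e := Rmin (Rmin e1 e2) 1 / 2).
    assert (Hm1 : Rmin (Rmin e1 e2) 1 <= Rmin e1 e2) by apply Rmin_l.
    assert (Hm2 : Rmin (Rmin e1 e2) 1 <= 1) by apply Rmin_r.
    assert (Hm3 : Rmin e1 e2 <= e1) by apply Rmin_l.
    assert (Hm4 : Rmin e1 e2 <= e2) by apply Rmin_r.
    assert (Hm5 : 0 < Rmin (Rmin e1 e2) 1).
    { apply Rmin_glb_lt; [apply Rmin_glb_lt|]; lra. }
    assert (Heq : mix x y1 e = mix x y2 e).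
    { apply Hinj. apply Hn1; unfold e; lra. apply Hn2; unfold e; lra.
      rewrite !push_mix by (unfold e; lra). rewrite Hf. reflexivity. }
    destruct (classic (y1 = x)) as [Hx|Hx].
    + assert (Hv := equal_f Heq y2). unfold mix in Hv.
      repeat destruct excluded_middle_informative; subst; try congruence; unfold e in Hv; lra.
    + assert (Hv := equal_f Heq y1). unfold mix in Hv.
      repeat destruct excluded_middle_informative; subst; try congruence; unfold e in Hv; lra.
  - intros b Hb. destruct (classic (b = f x)) as [Hbx|Hbx].
    { exists x. split; [apply Hdiag|auto]. }
    destruct (Hopen (star E x) (star_open E x)) as [_ Hw].
    destruct Hb as [x' [y' [Hxy [Hfx Hfy]]]].
    assert (Hs : is_simplex (img_rel f E) (f x :: b :: nil)).
    { intros a c [Ha|[Ha|[]]] [Hc|[Hc|[]]]; subst.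
      - exists x, x; auto.
      - exists x', y'; auto.
      - exists y', x'; auto.
      - exists y', y'; auto. }
    assert (Hmem : exists a, star E x a /\ S a /\ push f a = push f d).
    { exists d. split; auto. split; auto. unfold d, mix.
      repeat destruct excluded_middle_informative; try congruence; lra. }
    assert (Hsd : supp_in (push f d) (f x :: b :: nil)).
    { rewrite Hpd. intros v Hv. unfold mix in Hv. simpl.
      repeat destruct excluded_middle_informative; subst; auto; lra. }
    destruct (Hw _ Hs _ Hmem Hsd) as [eps [Heps Hu]].
    set (e := Rmin eps 1 / 2).
    assert (Hm1 : Rmin eps 1 <= eps) by apply Rmin_l.
    assert (Hm2 : Rmin eps 1 <= 1) by apply Rmin_r.
    assert (Hm5 : 0 < Rmin eps 1) by (apply Rmin_glb_lt; lra).
    destruct (Hu (mix (f x) b e)) as [a [[Hra Hax] [HSa Hpa]]].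
    + apply mix_rips; try (apply Hs; simpl; auto). unfold e; lra.
    + intros v Hv. unfold mix in Hv. simpl.
      repeat destruct excluded_middle_informative; subst; auto; lra.
    + rewrite Hpd. intros v Hv. unfold mix.
      repeat destruct excluded_middle_informative; subst; apply Rabs_def1; unfold e; lra.
    + assert (Hpb : push f a b = e).
      { rewrite Hpa. unfold mix. repeat destruct excluded_middle_informative; subst; try congruence. lra. }
      destruct Hra as [Hnn [l [Hnd [Hml [Hsimp Hsum]]]]].
      rewrite (push_eq f a l b Hnd Hml) in Hpb.
      destruct (lsum_nz (fun v : X => if excluded_middle_informative (f v = b) then a v else 0) l) as [u [Hul Hgu]].
      { rewrite Hpb. unfold e. lra. }
      destruct excluded_middle_informative as [Hfu|]; [|lra].
      exists u. split; auto. apply Hsimp; auto. apply Hml. lra.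
Qed.


Definition injb {X Y} (f : X -> Y) (F : rel X) :=
  forall x y1 y2, F x y1 -> F x y2 -> f y1 = f y2 -> y1 = y2.

Lemma NoDup_map_on {A B} (f : A -> B) l : NoDup l ->
  (forall a b, In a l -> In b l -> f a = f b -> a = b) -> NoDup (map f l).
Proof.
  induction 1 as [|a l Ha Hl IH]; simpl; intros H; constructor.
  - intro Hin. apply in_map_iff in Hin. destruct Hin as [b [Hb Hbl]].
    assert (b = a) by (apply H; auto). subst; contradiction.
  - apply IH; intros; apply H; auto.
Qed.

Lemma push_nz {X Y} (f : X -> Y) F t z : rips_pt F t -> push f t z <> 0 ->
  exists v, t v <> 0 /\ f v = z.
Proof.
  intros [Hnn [l [Hnd [Hml _]]]] H.
  rewrite (push_eq f t l z Hnd Hml) in H.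
  destruct (lsum_nz (fun v => if excluded_middle_informative (f v = z) then t v else 0) l H)
    as [u [Hu Hg]].
  destruct excluded_middle_informative; [|lra]. exists u; split; auto.
Qed.

Lemma push_val {X Y} (f : X -> Y) F t v : injb f F -> rips_pt F t -> t v <> 0 ->
  push f t (f v) = t v.
Proof.
  intros Hinj Ht Hv. destruct Ht as [Hnn [l [Hnd [Hml [Hs _]]]]].
  rewrite (push_eq f t l _ Hnd Hml).
  rewrite (lsum_one _ l v Hnd); [|apply Hml; auto|].
  - destruct excluded_middle_informative; congruence.
  - intros u Hu Huv. destruct excluded_middle_informative as [e|]; auto.
    exfalso. apply Huv. apply (Hinj v); auto; apply Hs; auto; apply Hml; auto.
Qed.

Lemma push_val_ball {X Y} (f : X -> Y) F t x v : injb f F -> rips_pt F t -> t x <> 0 ->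
  F x v -> push f t (f v) = t v.
Proof.
  intros Hinj Ht Hx Hv. destruct (classic (t v = 0)) as [H0|H0].
  - apply NNPP; intro Hp. destruct (push_nz f F t (f v) Ht) as [w [Hw Hfw]].
    + rewrite H0 in Hp; auto.
    + destruct Ht as [_ [l [_ [Hml [Hs _]]]]].
      assert (w = v) by (apply (Hinj x); auto; apply Hs; apply Hml; auto).
      subst; contradiction.
  - apply (push_val f F); auto.
Qed.

Lemma rips_nonempty {V} (E : rel V) t : rips_pt E t -> exists y, 0 < t y.
Proof.
  intros [Hnn [l [_ [Hml [_ Hsum]]]]].
  destruct (lsum_nz t l) as [u [_ Hu]]. rewrite Hsum; lra.
  exists u. specialize (Hnn u). lra.
Qed.

Lemma push_rips {X Y} (f : X -> Y) F t : injb f F -> rips_pt F t ->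
  rips_pt (img_rel f F) (push f t).
Proof.
  intros Hinj Ht. assert (Ht' := Ht).
  destruct Ht' as [Hnn [l [Hnd [Hml [Hs Hsum]]]]]. split.
  - intro z. destruct (classic (push f t z = 0)) as [H|H]; [lra|].
    destruct (push_nz f F t z Ht H) as [v [Hv Hfv]]. subst.
    rewrite (push_val f F t v Hinj Ht Hv); auto.
  - exists (map f l). split; [|split; [|split]].
    + apply NoDup_map_on; auto. intros a b Ha Hb. apply (Hinj a); apply Hs; auto.
    + intro z. rewrite in_map_iff. split.
      * intros [v [Hfv Hv]]. subst. assert (Hv' : t v <> 0) by (apply Hml; auto).
        rewrite (push_val f F t v Hinj Ht Hv'); auto.
      * intro H. destruct (push_nz f F t z Ht H) as [v [Hv Hfv]]. exists v; split; auto.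
        apply Hml; auto.
    + intros a b Ha Hb. apply in_map_iff in Ha, Hb.
      destruct Ha as [u [Hu Hul]]; destruct Hb as [w [Hw Hwl]]. subst.
      exists u, w; auto.
    + rewrite map_map. rewrite <- Hsum. f_equal. apply map_ext_in.
      intros v Hv. apply (push_val f F); auto. apply Hml; auto.
Qed.

Lemma push_val_s {X Y} (f : X -> Y) F t s v : injb f F -> rips_pt F t ->
  is_simplex F s -> supp_in t s -> In v s -> push f t (f v) = t v.
Proof.
  intros Hinj Ht Hs Hts Hv. destruct (classic (t v = 0)) as [H0|H0].
  - apply NNPP; intro Hp. destruct (push_nz f F t (f v) Ht) as [w [Hw Hfw]].
    + rewrite H0 in Hp; auto.
    + assert (w = v) by (apply (Hinj w); auto; apply Hs; auto).
      subst; contradiction.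
  - apply (push_val f F); auto.
Qed.

Lemma push_cont {X Y} (f : X -> Y) F W : injb f F ->
  weak_open (img_rel f F) W -> weak_open F (fun a => rips_pt F a /\ W (push f a)).
Proof.
  intros Hinj [_ Hw]. split. { intros t [H _]; auto. }
  intros s Hs t [Ht HWt] Hts.
  assert (Hs' : is_simplex (img_rel f F) (map f s)).
  { intros a b Ha Hb. apply in_map_iff in Ha, Hb.
    destruct Ha as [u [Hu Hul]]; destruct Hb as [w [Hw' Hwl]]. subst.
    exists u, w; auto. }
  assert (Hsupp : forall u, rips_pt F u -> supp_in u s -> supp_in (push f u) (map f s)).
  { intros u Hu Hus z Hz. destruct (push_nz f F u z Hu Hz) as [v [Hv Hfv]].
    subst. apply in_map; auto. }
  destruct (Hw _ Hs' _ HWt (Hsupp t Ht Hts)) as [eps [Heps Hu]].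
  exists eps. split; auto. intros u Hru Hus Hcl. split; auto.
  apply Hu; auto. apply push_rips; auto.
  intros z Hz. apply in_map_iff in Hz. destruct Hz as [v [Hfv Hv]]. subst.
  rewrite (push_val_s f F u s v), (push_val_s f F t s v); auto.
Qed.


Definition liftpt {X Y} (f : X -> Y) (F : rel X) (x : X) (w : Y) : X :=
  epsilon (inhabits x) (fun v => F x v /\ f v = w).

Definition liftf {X Y} (f : X -> Y) (F : rel X) (x : X) (c : Y -> R) : X -> R :=
  fun v => if excluded_middle_informative (F x v) then c (f v) else 0.

Definition lex {X Y} (f : X -> Y) (F : rel X) :=
  forall x b, img_rel f F (f x) b -> exists y, F x y /\ f y = b.
Definition lsimp {X Y} (f : X -> Y) (F : rel X) :=
  forall x u w, F x u -> F x w -> img_rel f F (f u) (f w) -> F u w.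

Lemma liftpt_spec {X Y} (f : X -> Y) F x w : lex f F -> img_rel f F (f x) w ->
  F x (liftpt f F x w) /\ f (liftpt f F x w) = w.
Proof.
  intros Hex H. unfold liftpt. apply epsilon_spec. apply Hex; auto.
Qed.

Lemma supp_ball {V} (F : rel V) a x v : rips_pt F a -> a x <> 0 -> a v <> 0 -> F x v.
Proof.
  intros [_ [l [_ [Hml [Hs _]]]]] Hx Hv. apply Hs; apply Hml; auto.
Qed.

Lemma lift_simplex {X Y} (f : X -> Y) F x s : lex f F -> lsimp f F ->
  is_simplex (img_rel f F) s -> In (f x) s -> is_simplex F (map (liftpt f F x) s).
Proof.
  intros Hex Hls Hs Hx a b Ha Hb. apply in_map_iff in Ha, Hb.
  destruct Ha as [w1 [Ha Hw1]]; destruct Hb as [w2 [Hb Hw2]]. subst.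
  destruct (liftpt_spec f F x w1) as [H1 H1']; auto.
  destruct (liftpt_spec f F x w2) as [H2 H2']; auto.
  apply (Hls x); auto. rewrite H1', H2'. auto.
Qed.

Lemma lift_in {X Y} (f : X -> Y) F x s v : injb f F -> lex f F ->
  is_simplex (img_rel f F) s -> In (f x) s -> F x v -> In (f v) s ->
  In v (map (liftpt f F x) s).
Proof.
  intros Hinj Hex Hs Hx Hv Hfv.
  destruct (liftpt_spec f F x (f v)) as [H1 H2]; auto.
  apply in_map_iff. exists (f v). split; auto. apply (Hinj x); auto.
Qed.

Lemma lift_spec {X Y} (f : X -> Y) F x c : injb f F -> lex f F -> lsimp f F -> has_diag F ->
  rips_pt (img_rel f F) c -> 0 < c (f x) ->
  rips_pt F (liftf f F x c) /\ 0 < liftf f F x c x /\ push f (liftf f F x c) = c.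
Proof.
  intros Hinj Hex Hls Hdiag Hc Hcx.
  assert (Hc' := Hc). destruct Hc' as [Hnn [lc [Hnd [Hml [Hs Hsum]]]]].
  assert (Hxl : In (f x) lc) by (apply Hml; lra).
  assert (Hr : rips_pt F (liftf f F x c)).
  { split.
    - intro v. unfold liftf. destruct excluded_middle_informative; auto; lra.
    - exists (map (liftpt f F x) lc). split; [|split; [|split]].
      + apply NoDup_map_on; auto. intros a b Ha Hb Hab.
        destruct (liftpt_spec f F x a) as [_ Ha']; auto.
        destruct (liftpt_spec f F x b) as [_ Hb']; auto.
        rewrite <- Ha', <- Hb', Hab; auto.
      + intro v. split.
        * intro Hv. apply in_map_iff in Hv. destruct Hv as [w [Hw Hwl]]. subst.
          destruct (liftpt_spec f F x w) as [H1 H2]; auto.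
          unfold liftf. destruct excluded_middle_informative; [|contradiction].
          rewrite H2. apply Hml; auto.
        * unfold liftf. destruct excluded_middle_informative as [HF|]; [|lra].
          intro Hv. apply lift_in; auto. apply Hml; auto.
      + apply lift_simplex; auto.
      + rewrite map_map, <- Hsum. f_equal. apply map_ext_in. intros w Hw.
        destruct (liftpt_spec f F x w) as [H1 H2]; auto.
        unfold liftf. destruct excluded_middle_informative; [|contradiction].
        rewrite H2; auto. }
  split; auto. split.
  - unfold liftf. destruct excluded_middle_informative as [|n]; auto. exfalso; apply n, Hdiag.
  - extensionality z. destruct (classic (c z = 0)) as [H0|H0].
    + apply NNPP; intro Hp. destruct (push_nz f F _ z Hr) as [v [Hv Hfv]].
      { rewrite H0 in Hp; auto. }
      unfold liftf in Hv. destruct excluded_middle_informative; [|lra].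
      subst; contradiction.
    + assert (Hz : In z lc) by (apply Hml; auto).
      destruct (liftpt_spec f F x z) as [H1 H2]; auto.
      assert (Hlv : liftf f F x c (liftpt f F x z) = c z).
      { unfold liftf. destruct excluded_middle_informative; [|contradiction]. rewrite H2; auto. }
      rewrite <- H2 at 1. rewrite (push_val f F); auto. rewrite Hlv; auto.
Qed.


Lemma ec_cov2 {X Y} (f : X -> Y) (F : rel X) : injb f F -> lex f F -> lsimp f F -> has_diag F ->
  rips_covering f F.
Proof.
  intros Hinj Hex Hls Hdiag.
  split; [|split].
  { intros a Ha. apply push_rips; auto. }
  { intros W HW. apply push_cont; auto. }
  intros b Hb. destruct (rips_nonempty _ b Hb) as [y0 Hy0].
  exists (star (img_rel f F) y0). split; [apply star_open|]. split; [split; auto|].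
  exists (fun S => exists x, f x = y0 /\ S = star F x).
  split; [|split; [|split; [|split]]].
  - intros S [x [_ ->]]; apply star_open.
  - intros S1 S2 [x1 [H1 ->]] [x2 [H2 ->]] [a [[Ha Ha1] [_ Ha2]]].
    assert (x1 = x2).
    { apply (Hinj x1); auto. apply (supp_ball F a); auto; lra. congruence. }
    subst; tauto.
  - intros a Ha [Hpr Hpy]. destruct (push_nz f F a y0 Ha) as [v [Hv Hfv]]; [lra|].
    exists (star F v). split; [exists v; auto|]. split; auto.
    destruct Ha as [Hnn _]. specialize (Hnn v). lra.
  - intros S a [x [Hx ->]] [Ha Hax]. split. apply push_rips; auto.
    rewrite <- Hx. rewrite (push_val f F); auto; lra.
  - intros S [x [Hx ->]]. split; [|split].
    + intros a1 a2 [Ha1 H1] [Ha2 H2] Hp. extensionality v.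
      destruct (classic (F x v)) as [HF|HF].
      * rewrite <- (push_val_ball f F a1 x v), <- (push_val_ball f F a2 x v); auto; try lra.
        rewrite Hp; auto.
      * assert (a1 v = 0).
        { apply NNPP; intro. apply HF. apply (supp_ball F a1); auto; lra. }
        assert (a2 v = 0).
        { apply NNPP; intro. apply HF. apply (supp_ball F a2); auto; lra. }
        congruence.
    + intros u [Hu Hu0]. exists (liftf f F x u).
      subst. destruct (lift_spec f F x u) as [H1 [H2 H3]]; auto.
      split; auto. split; auto.
    + intros W [_ HW]. split.
      { intros c [a [_ [[Ha _] Hpa]]]. subst. apply push_rips; auto. }
      intros s Hs c [a [HWa [[Ha Hax] Hpa]]] Hcs.
      assert (Hcy : c y0 = a x).
      { rewrite <- Hpa, <- Hx. rewrite (push_val f F); auto; lra. }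
      assert (Hys : In (f x) s) by (apply Hcs; rewrite Hx; lra).
      assert (Hlss : is_simplex F (map (liftpt f F x) s)) by (apply lift_simplex; auto).
      assert (Hsupp : supp_in a (map (liftpt f F x) s)).
      { intros v Hv. assert (HF : F x v) by (apply (supp_ball F a); auto; lra).
        apply lift_in; auto. apply Hcs. rewrite <- Hpa.
        rewrite (push_val_ball f F a x v); auto. lra. }
      destruct (HW _ Hlss a HWa Hsupp) as [eps [Heps Hu']].
      exists (Rmin eps (c y0)). split. { apply Rmin_glb_lt; lra. }
      intros u Hu Hus Hcl.
      assert (Hm1 : Rmin eps (c y0) <= eps) by apply Rmin_l.
      assert (Hm2 : Rmin eps (c y0) <= c y0) by apply Rmin_r.
      assert (Huy : 0 < u (f x)).
      { assert (H := Hcl (f x) Hys). apply Rabs_def2 in H. rewrite Hx in *. lra. }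
      destruct (lift_spec f F x u) as [H1 [H2 H3]]; auto.
      exists (liftf f F x u). split; [|split; [split; auto|auto]].
      apply Hu'; auto.
      * intros v Hv. unfold liftf in Hv. destruct excluded_middle_informative as [HF|]; [|lra].
        apply lift_in; auto.
      * intros v Hv. apply in_map_iff in Hv. destruct Hv as [w [Hw Hws]]. subst v.
        destruct (liftpt_spec f F x w) as [Hw1 Hw2]; auto.
        unfold liftf. destruct excluded_middle_informative; [|contradiction].
        rewrite <- (push_val_ball f F a x (liftpt f F x w)); auto; try lra.
        rewrite Hw2, Hpa. eapply Rlt_le_trans; [apply Hcl; auto|]. auto.
Qed.


Theorem mainTheorem1 (X Y : Type) (UX : uniformity X) (UY : uniformity Y)
  (f : X -> Y) (Hgen : generates UX UY f) :
  uniform_covering UX UY f <->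
  is_base UX (fun E => ent UX E /\ evenly_covers f E).
Proof.
  split.
  - intros [_ [HB1 HB2]]. split.
    + intros E [H _]; auto.
    + intros G HG. destruct (HB2 G HG) as [E [[HE Hc] HEG]].
      exists E. split; auto. split; auto.
      apply cov_ec; auto. apply (ent_sym _ UX); auto. apply (ent_diag _ UX); auto.
  - intros [HB1 HB2]. split; auto. split.
    + intros E [H _]; auto.
    + intros G HG. destruct (HB2 G HG) as [E0 [[HE0 Hec0] HE0G]].
      destruct (ent_half _ UX E0 HE0) as [H [HH HHsq]].
      destruct (HB2 H HH) as [F [[HF Hec] HFH]].
      assert (Hdiag : has_diag F) by (apply (ent_diag _ UX); auto).
      assert (HdH : has_diag H) by (apply (ent_diag _ UX); auto).
      assert (Hsym : symmetric_rel F) by (apply (ent_sym _ UX); auto).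
      assert (Hsq : forall x z, rel_square F x z -> E0 x z).
      { intros x z [y [H1 H2]]. apply HHsq. exists y; auto. }
      exists F. split.
      * split; auto. apply ec_cov2; auto.
        -- intros x y1 y2 H1 H2 Hf. destruct (Hec x) as [_ [Hi _]]. apply Hi; auto.
        -- intros x b Hb. destruct (Hec x) as [_ [_ Hs]]. apply Hs; auto.
        -- intros x u w Hu Hw Hi. destruct (Hec u) as [_ [_ Hs]].
           destruct (Hs (f w) Hi) as [z [Hz Hfz]].
           assert (z = w).
           { destruct (Hec0 u) as [_ [Hi0 _]]. apply Hi0; auto.
             - apply Hsq. exists u; split; auto.
             - apply Hsq. exists x; split; auto. }
           subst; auto.
      * intros x y Hxy. apply HE0G. apply HHsq. exists y; split; auto.
Qed.
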